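(* Let $N=3$ and let $\mathcal A$ be the algebra generated by $L_{ij}$ ($1\le i,j\le3$) subject to $\hat RL_2L_1=L_2L_1\hat R$ with $\hat R$ the braid matrix of type $\hat o(3)$. Then in $\mathcal A$ the six elements $$L_{11}L_{33}+q^{-1/2}L_{21}L_{23}+q^{-1}L_{31}L_{13},\quad q^{1/2}L_{12}L_{32}+L_{22}L_{22}+q^{-1/2}L_{32}L_{12},\quad qL_{13}L_{31}+q^{1/2}L_{23}L_{21}+L_{33}L_{11},$$ $$L_{11}L_{33}+q^{-1/2}L_{12}L_{32}+q^{-1}L_{13}L_{31},\quad q^{1/2}L_{21}L_{23}+L_{22}L_{22}+q^{-1/2}L_{23}L_{21},\quad qL_{31}L_{13}+q^{1/2}L_{32}L_{12}+L_{33}L_{11}$$ are all equal, and their common value $C$ is central in $\mathcal A$ (i.e. $CL_{ij}=L_{ij}C$ for all $i,j$).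
   Context: Fix nonzero complex $q$ with square root $q^{1/2}$. $(ij)$ denotes the $3\times3$ matrix unit, $i'=4-i$, $\rho=(\tfrac12,0,-\tfrac12)$, $P'_0=\sum_{i,j=1}^3q^{\rho_{i'}-\rho_j}(ij)\otimes(i'j')$, and $\hat R=I_9-e^{-\eta}P'_0$ with $e^{\eta}+e^{-\eta}=q+1+q^{-1}$. $L_1=\sum_{i,j}L_{ij}(ij)\otimes I_3$, $L_2=\sum_{k,l}L_{kl}I_3\otimes(kl)$, so $L_2L_1=\sum L_{kl}L_{ij}(ij)\otimes(kl)$. *)

(* Defs.v *)
From HB Require Import structures.
From mathcomp Require Import all_boot all_order all_algebra.
Set Implicit Arguments. Unset Strict Implicit. Unset Printing Implicit Defensive.
Import Order.TTheory GRing.Theory Num.Theory.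
Local Open Scope ring_scope.

(* Indices 1..3 of the paper are represented by 'I_3 = {0,1,2} (shift by one).
   The involution i' = 4 - i becomes rev_ord i (i |-> 2 - i). *)

Definition Lm (A : Type) (L : 'I_3 -> 'I_3 -> A) (i j : nat) : A :=
  L (inord i.-1) (inord j.-1).

(* Entries of hat R = I_9 - t P'_0, where t = e^{-eta}, s = q^{1/2},
   indexed as R[(a,b),(c,d)] (row index (a,b) <-> e_a (x) e_b).
   P'_0 = sum_{i,j} q^{rho_{i'} - rho_j} (ij) (x) (i'j'), and with 0-based
   indices 2(rho_{i'} - rho_j) = i + j - 2, so q^{rho_{i'}-rho_j} = s^(i+j-2). *)
Definition Rhat (K : fieldType) (s t : K) (a b c d : 'I_3) : K :=
  ((a == c) && (b == d))%:R
  - t * (if (b == rev_ord a) && (d == rev_ord c)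
         then s ^ ((a : int) + (c : int) - 2) else 0).

(* Entries of L_2 L_1 = sum L_{kl} L_{ij} (ij) (x) (kl):
   (L_2 L_1)[(a,b),(c,d)] = L_{bd} L_{ac}. *)
Definition L2L1 (A : ringType) (L : 'I_3 -> 'I_3 -> A) (a b c d : 'I_3) : A :=
  L b d * L a c.

Definition RLL_relation (K : fieldType) (A : algType K) (s t : K)
    (L : 'I_3 -> 'I_3 -> A) : Prop :=
  forall a b c d : 'I_3,
    \sum_(e < 3) \sum_(f < 3) Rhat s t a b e f *: L2L1 L e f c d
    = \sum_(e < 3) \sum_(f < 3) Rhat s t e f c d *: L2L1 L a b e f.

(* Main.v *)
Require Import Defs.
From HB Require Import structures.
From mathcomp Require Import all_boot all_order all_algebra.
Import Order.TTheory GRing.Theory Num.Theory.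
Local Open Scope ring_scope.

Lemma sum_delta (K : fieldType) (V : lmodType K) (b : 'I_3) (F : 'I_3 -> V) :
  \sum_f ((b == f)%:R *: F f) = F b.
Proof.
rewrite (bigD1 b) //= eqxx scale1r big1 ?addr0 // => f /negbTE.
by rewrite eq_sym => ->; rewrite scale0r.
Qed.

Lemma sum_if (K : fieldType) (V : lmodType K) (g : 'I_3) (P : bool) (k : K) (F : 'I_3 -> V) :
  \sum_f ((if (f == g) && P then k else 0) *: F f) = P%:R *: (k *: F g).
Proof.
rewrite (bigD1 g) //= eqxx big1 ?addr0; first by case: P; rewrite ?scale1r ?scale0r.
by move=> f /negbTE ->; rewrite scale0r.
Qed.

Lemma key {K : fieldType} {s t : K} (ht : t != 0) {A : algType K}
  {L : 'I_3 -> 'I_3 -> A} (hRLL : RLL_relation s t L) (a b c d : 'I_3) :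
  (b == rev_ord a)%:R *: \sum_(e < 3) s ^ ((a:int) + (e:int) - 2) *: (L (rev_ord e) d * L e c)
  = (d == rev_ord c)%:R *: \sum_(e < 3) s ^ ((e:int) + (c:int) - 2) *: (L b (rev_ord e) * L a e).
Proof.
have := hRLL a b c d; rewrite /Rhat.
under eq_bigr do under eq_bigr do rewrite scalerBl.
under [in RHS]eq_bigr do under eq_bigr do rewrite scalerBl.
under eq_bigr do rewrite sumrB.
under [in RHS]eq_bigr do rewrite sumrB.
rewrite !sumrB /=.
have E1 : \sum_(e < 3) \sum_(f < 3) ((a == e) && (b == f))%:R *: L2L1 L e f c d = L2L1 L a b c d.
  under eq_bigr do under eq_bigr do rewrite -mulnb natrM -scalerA.
  under eq_bigr do rewrite -scaler_sumr sum_delta.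
  by rewrite sum_delta.
have E2 : \sum_(e < 3) \sum_(f < 3) ((e == c) && (f == d))%:R *: L2L1 L a b e f = L2L1 L a b c d.
  under eq_bigr => e _ do under eq_bigr => f _ do rewrite -mulnb natrM -scalerA [(f == d)]eq_sym.
  under eq_bigr do rewrite -scaler_sumr sum_delta.
  by under eq_bigr do rewrite eq_sym; rewrite sum_delta.
rewrite E1 E2 => /(congr1 (fun x => L2L1 L a b c d - x)); rewrite !subKr.
under eq_bigr => e _ do (under eq_bigr => f _ do rewrite -scalerA andbC; rewrite -scaler_sumr sum_if).
under [in RHS]eq_bigr => e _ do (under eq_bigr => f _ do rewrite -scalerA; rewrite -scaler_sumr sum_if).
rewrite -!scaler_sumr => /(scalerI ht).
by [].
Qed.
Lemma powz {K : fieldType} (s : K) (hs : s != 0) (a e : nat) :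
  s ^ ((a:int) + (e:int) - 2) = s ^- 2 * (s ^+ a * s ^+ e).
Proof.
rewrite expfzDr ?expfzDr // mulrC -exprnN.
by [].
Qed.
Definition FF {K : fieldType} (s : K) {A : algType K} (L : 'I_3 -> 'I_3 -> A) (d c : 'I_3) :=
  \sum_(e < 3) s ^+ e *: (L (rev_ord e) d * L e c).
Definition GG {K : fieldType} (s : K) {A : algType K} (L : 'I_3 -> 'I_3 -> A) (b a : 'I_3) :=
  \sum_(e < 3) s ^+ e *: (L b (rev_ord e) * L a e).

Lemma keyF {K : fieldType} {s t : K} (hs : s != 0) (ht : t != 0) {A : algType K}
  {L : 'I_3 -> 'I_3 -> A} (hRLL : RLL_relation s t L) (a b c d : 'I_3) :
  (b == rev_ord a)%:R *: (s ^+ a *: FF s L d c) = (d == rev_ord c)%:R *: (s ^+ c *: GG s L b a).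
Proof.
have := key ht hRLL a b c d.
under eq_bigr => e _ do rewrite powz // -!scalerA.
under [in RHS]eq_bigr => e _ do rewrite powz // [s ^+ e * _]mulrC -!scalerA.
rewrite -!scaler_sumr !scalerA ![_%:R * s ^- 2]mulrC -!scalerA.
have h2 : s ^- 2 != 0 by rewrite invr_eq0 expf_neq0.
by move/(scalerI h2).
Qed.

Definition o0 : 'I_3 := @Ordinal 3 0 isT.
Definition o1 : 'I_3 := @Ordinal 3 1 isT.
Definition o2 : 'I_3 := @Ordinal 3 2 isT.
Lemma r0 : rev_ord o0 = o2. Proof. by apply: val_inj. Qed.
Lemma r1 : rev_ord o1 = o1. Proof. by apply: val_inj. Qed.
Lemma r2 : rev_ord o2 = o0. Proof. by apply: val_inj. Qed.
Lemma i0 : (inord 0 : 'I_3) = o0. Proof. by apply: val_inj; rewrite /= inordK. Qed.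
Lemma i1 : (inord 1 : 'I_3) = o1. Proof. by apply: val_inj; rewrite /= inordK. Qed.
Lemma i2 : (inord 2 : 'I_3) = o2. Proof. by apply: val_inj; rewrite /= inordK. Qed.

Lemma sum3 (V : nmodType) (F : 'I_3 -> V) : \sum_(i < 3) F i = F o0 + F o1 + F o2.
Proof.
rewrite !big_ord_recl big_ord0 addr0 addrA; congr (F _ + F _ + F _); exact: val_inj.
Qed.

Lemma FF_exp {K : fieldType} (s : K) {A : algType K} (L : 'I_3 -> 'I_3 -> A) d c :
  FF s L d c = L o2 d * L o0 c + s *: (L o1 d * L o1 c) + s ^+ 2 *: (L o0 d * L o2 c).
Proof. by rewrite /FF sum3 r0 r1 r2 /= scale1r expr1. Qed.

Lemma GG_exp {K : fieldType} (s : K) {A : algType K} (L : 'I_3 -> 'I_3 -> A) b a :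
  GG s L b a = L b o2 * L a o0 + s *: (L b o1 * L a o1) + s ^+ 2 *: (L b o0 * L a o2).
Proof. by rewrite /GG sum3 r0 r1 r2 /= scale1r expr1. Qed.

Lemma add3rev (V : nmodType) (x y z : V) : x + y + z = z + y + x.
Proof. by rewrite addrC (addrC x) addrA. Qed.

Lemma expRev {K : fieldType} (s : K) (j : 'I_3) : s ^+ rev_ord j * s ^+ j = s ^+ 2.
Proof. by rewrite -exprD; case: j => [[|[|[|]]] ?]. Qed.
Theorem mainTheorem5 (K : numClosedFieldType) (s t : K)
  (hs : s != 0) (ht : t != 0)
  (heta : t + t^-1 = s ^+ 2 + 1 + s ^- 2)
  (A : algType K) (L : 'I_3 -> 'I_3 -> A)
  (hRLL : RLL_relation s t L) :
  let C1 := Lm L 1 1 * Lm L 3 3 + s^-1 *: (Lm L 2 1 * Lm L 2 3)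
            + s ^- 2 *: (Lm L 3 1 * Lm L 1 3) in
  let C2 := s *: (Lm L 1 2 * Lm L 3 2) + Lm L 2 2 * Lm L 2 2
            + s^-1 *: (Lm L 3 2 * Lm L 1 2) in
  let C3 := s ^+ 2 *: (Lm L 1 3 * Lm L 3 1) + s *: (Lm L 2 3 * Lm L 2 1)
            + Lm L 3 3 * Lm L 1 1 in
  let C4 := Lm L 1 1 * Lm L 3 3 + s^-1 *: (Lm L 1 2 * Lm L 3 2)
            + s ^- 2 *: (Lm L 1 3 * Lm L 3 1) in
  let C5 := s *: (Lm L 2 1 * Lm L 2 3) + Lm L 2 2 * Lm L 2 2
            + s^-1 *: (Lm L 2 3 * Lm L 2 1) in
  let C6 := s ^+ 2 *: (Lm L 3 1 * Lm L 1 3) + s *: (Lm L 3 2 * Lm L 1 2)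
            + Lm L 3 3 * Lm L 1 1 in
  [/\ C2 = C1, C3 = C1, C4 = C1, C5 = C1 & C6 = C1] /\
    (forall i j : 'I_3, C1 * L i j = L i j * C1).
Proof.
Proof.
move=> C1 C2 C3 C4 C5 C6.
have hK := keyF hs ht hRLL.
have s2 : s ^+ 2 != 0 by rewrite expf_neq0.
have FG (a c : 'I_3) : s ^+ a *: FF s L (rev_ord c) c = s ^+ c *: GG s L (rev_ord a) a.
  by have := hK a (rev_ord a) c (rev_ord c); rewrite !eqxx !scale1r.
have F0 (d c : 'I_3) : d != rev_ord c -> FF s L d c = 0.
  move=> /negbTE hd; have := hK o0 (rev_ord o0) c d.
  by rewrite hd eqxx scale1r scale0r expr0 scale1r.
have G0 (b a : 'I_3) : b != rev_ord a -> GG s L b a = 0.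
  move=> /negbTE hb; have := hK a b o0 (rev_ord o0).
  by rewrite hb eqxx scale1r scale0r expr0 scale1r => <-.
have C1e : C1 = L o0 o0 * L o2 o2 + s^-1 *: (L o1 o0 * L o1 o2) + s ^- 2 *: (L o2 o0 * L o0 o2).
  by rewrite /C1 /Lm /= i0 i1 i2.
have base : FF s L o0 o2 = s ^+ 2 *: C1.
  rewrite FF_exp C1e !scalerDr !scalerA divff // scale1r.
  rewrite expr2 -mulrA divff // mulr1 -expr2; exact: add3rev.
have Gv (a : 'I_3) : GG s L (rev_ord a) a = s ^+ a *: C1.
  apply: (scalerI s2); have := FG a o2; rewrite r2 base /= => <-.
  by rewrite !scalerA mulrC.
have Fv (c : 'I_3) : FF s L (rev_ord c) c = s ^+ c *: C1.
  by have := FG o0 c; rewrite Gv /= expr0 !scale1r.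
have Fgen (d c : 'I_3) : FF s L d c = (d == rev_ord c)%:R *: (s ^+ c *: C1).
  by case: eqVneq => [->|/F0 ->]; rewrite ?Fv ?scale1r ?scale0r.
have Ggen (b a : 'I_3) : GG s L b a = (b == rev_ord a)%:R *: (s ^+ a *: C1).
  by case: eqVneq => [->|/G0 ->]; rewrite ?Gv ?scale1r ?scale0r.
have e1 : s * s^-1 = 1 by rewrite divff.
have e2 : s ^+ 2 * s ^- 2 = 1 by rewrite divff.
have e3 : s ^+ 2 * s^-1 = s by rewrite expr2 -mulrA divff // mulr1.
split; first split.
- apply: (scalerI hs); have := Fv o1; rewrite r1 FF_exp /= expr1 => <-.
  rewrite /C2 /Lm /= i0 i1 i2 !scalerDr !scalerA e1 scale1r -expr2; exact: add3rev.
- have := Fv o0; rewrite r0 FF_exp /= expr0 scale1r => <-.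
  rewrite /C3 /Lm /= i0 i1 i2; exact: add3rev.
- apply: (scalerI s2); have := Gv o2; rewrite r2 GG_exp /= => <-.
  rewrite /C4 /Lm /= i0 i1 i2 !scalerDr !scalerA e2 e3 scale1r; exact: add3rev.
- apply: (scalerI hs); have := Gv o1; rewrite r1 GG_exp /= expr1 => <-.
  rewrite /C5 /Lm /= i0 i1 i2 !scalerDr !scalerA e1 scale1r -expr2; exact: add3rev.
- have := Gv o0; rewrite r0 GG_exp /= expr0 scale1r => <-.
  rewrite /C6 /Lm /= i0 i1 i2; exact: add3rev.
move=> i j.
pose E := \sum_(e < 3) \sum_(f < 3) (s ^+ e * s ^+ f) *: (L i (rev_ord e) * L (rev_ord f) e * L f j).
have ER : E = s ^+ 2 *: (L i j * C1).
  have -> : E = \sum_(e < 3) s ^+ e *: (L i (rev_ord e) * FF s L e j).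
    rewrite /E /FF; apply: eq_bigr => e _; rewrite mulr_sumr scaler_sumr.
    by apply: eq_bigr => f _; rewrite -scalerAr scalerA mulrA.
  rewrite (bigD1 (rev_ord j)) //= big1 ?addr0.
    by rewrite Fgen eqxx scale1r rev_ordK -scalerAr scalerA expRev.
  by move=> e /negbTE he; rewrite Fgen he scale0r mulr0 scaler0.
have EL : E = s ^+ 2 *: (C1 * L i j).
  have -> : E = \sum_(f < 3) s ^+ f *: (GG s L i (rev_ord f) * L f j).
    rewrite /E /GG exchange_big; apply: eq_bigr => f _; rewrite mulr_suml scaler_sumr.
    by apply: eq_bigr => e _; rewrite -scalerAl scalerA mulrC.
  rewrite (bigD1 i) //= big1 ?addr0.
    by rewrite Ggen rev_ordK eqxx scale1r -scalerAl scalerA mulrC expRev.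
  move=> f /negbTE hf; rewrite Ggen rev_ordK eq_sym hf scale0r mul0r scaler0 //.
by apply: (scalerI s2); rewrite -EL -ER.
Qed.
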